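(* Consider a generalised recombinator dynamics with rate $r\in(0,1]$ in which $g_1>0$, and let $x^*$ be a stationary state. Suppose that $v_{x^*}(a_d|\cdot)=u_{x^*}(a_d|\cdot)$ on $\Delta(\operatorname{supp}_{-d}(x^* ))$ for every $d$ and every trait $a_d$ with $x^*(a_d)=0$. Then, for every such $a_d$, the generalised partner dynamics of $a_d$ has a unique globally stable equilibrium.
   Context: Setting: $D=\{1,\dots,|D|\}$ finite, $|D|\ge2$; finite trait sets $A_d$; types $A=\prod_dA_d$, $a=(a_d,a_{-d})$, $a_{-d}\in A_{-d}=\prod_{d'\ne d}A_{d'}$. Payoff $u:A\times A\to\mathbb{R}_{>0}$; for $x\in\Delta(A)$: $u_x(a)=\sum_{a'}x(a')u(a,a')$, $u_x=\sum_ax(a)u_x(a)$, $x(a_d)=\sum_{a_{-d}}x(a_d,a_{-d})$, $x(a_{-d})=\sum_{a_d}x(a_d,a_{-d})$, trait payoff $u_x(a_d)=\frac1{x(a_d)}\sum_{a_{-d}}x(a_d,a_{-d})u_x(a_d,a_{-d})$; supports $\operatorname{supp}(x)$, $\operatorname{supp}_d(x)$, $\operatorname{supp}_{-d}(x)$ are the sets of types/traits/trait profiles with positive (marginal) frequency. A function $f:A\times\Delta(A)\to[0,1]$, $f(a|x)$, is regular if $\sum_af(a|x)=1$ for all $x$; its marginal function is $\varphi(a_d,x)=\frac1{x(a_d)}\sum_{a'_{-d}}f(a_d,a'_{-d}|x)$, and $\varphi$ is trait payoff increasing if $u_x(a_d)>u_x(\hat a_d)\Rightarrow\varphi(a_d,x)>\varphi(\hat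 a_d,x)$. Generalised recombinator dynamics: $\dot x(a)=(1-r)f_1(a|x)+rf_2(a|x)-x(a)$, where $f_1,f_2$ are non-negative, regular, with trait-payoff-increasing marginal functions; $f_1(a|x)=g_1(a|x)x(a)$ with $g_1$ differentiable and $g_1(a|x)>g_1(a'|x)\iff u_x(a)>u_x(a')$; and $f_2$ satisfies (i) differentiability, (ii) trait combination: $\prod_dx(a_d)>0\Rightarrow f_2(a|x)>0$, (iii) trait growth inertia: if $x(a_d)=0$ and $\partial f_2(a_d,a_{-d}|x)/\partial x(a')>0$ then $\prod_{d'\ne d}x(a_{d'})>0$ and $a'_d=a_d$. For $a_d$ with $x^*(a_d)=0$ and $a'_{-d}\in\operatorname{supp}_{-d}(x^* )$: $v_{x^*}(a_d|a'_{-d})=\frac{\partial f_2(a_d,a'_{-d}|x^* )/\partial x(a_d,a'_{-d})}{\prod_{d'\ne d}x^*(a'_{d'})}$. For $y\in\Delta(\operatorname{supp}_{-d}(x^* ))$: $u_{x^*}(a_d|y)=\sum_{a'_{-d}\in\operatorname{supp}_{-d}(x^* )}g_1(a_d,a'_{-d}|x^* )y(a'_{-d})$, $v_{x^*}(a_d|y)=\sum_{a'_{-d}}v_{x^*}(a_d|a'_{-d})y(a'_{-d})$, $U^r_{x^*}(a_d|y)=(1-r)u_{x^*}(a_d|y)+rv_{x^*}(a_d|y)$. The generalised partner dynamics of $a_d$ is the dynamics on $\Delta(\operatorname{supp}_{-d}(x^* ))$: $\dot y(a_{-d})=(1-r)g_1(a_d,a_{-d}|x^* )y(a_{-d})+r\big(\prod_{d'\ne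 d}x^*(a_{d'})\big)v_{x^*}(a_d|y)-y(a_{-d})U^r_{x^*}(a_d|y)$. It has a unique globally stable equilibrium $\eta$ if $y^t\to\eta$ as $t\to\infty$ from every initial condition. Stationary means $\dot x=0$. *)

(* Defs.v *)
From HB Require Import structures.
From mathcomp Require Import all_boot all_order all_algebra.
From mathcomp Require Import all_classical all_reals all_analysis.
Unset Printing Implicit Defensive.
Import Order.TTheory GRing.Theory Num.Theory.
Import numFieldNormedType.Exports.
Local Open Scope ring_scope.
Local Open Scope classical_set_scope.

(* Loci D = 'I_nD, trait sets A d (finite types); types Ty = prod_d A d.
   A population state x : Ty -> R; f(a|x) is written f a x. *)
Definition Ty {nD : nat} (A : 'I_nD -> finType) := {dffun forall d : 'I_nD, A d}.

Section Defs.
Context {R : realType} {nD : nat} {A : 'I_nD -> finType}.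
Local Notation Ty := (Ty A).

Definition simplex (x : Ty -> R) : Prop :=
  (forall a, 0 <= x a) /\ \sum_a x a = 1.

(* x in Delta(S) for a subset S of types (x only looked at on S) *)
Definition simplexOn (S : pred Ty) (x : Ty -> R) : Prop :=
  (forall a, S a -> 0 <= x a) /\ \sum_(a | S a) x a = 1.

Definition margT (x : Ty -> R) (d : 'I_nD) (ad : A d) : R :=
  \sum_(a : Ty | a d == ad) x a.

Definition sameoff (d : 'I_nD) (a a' : Ty) : bool :=
  [forall d' : 'I_nD, (d' != d) ==> (a d' == a' d')].

Definition margP (x : Ty -> R) (d : 'I_nD) (a : Ty) : R :=
  \sum_(a' : Ty | sameoff d a a') x a'.

Definition ux (u : Ty -> Ty -> R) (x : Ty -> R) (a : Ty) : R :=
  \sum_a' x a' * u a a'.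

Definition traitpay (u : Ty -> Ty -> R) (x : Ty -> R) (d : 'I_nD) (ad : A d) : R :=
  (margT x d ad)^-1 * \sum_(a : Ty | a d == ad) x a * ux u x a.

Definition margfun (f : Ty -> (Ty -> R) -> R) (x : Ty -> R) (d : 'I_nD) (ad : A d) : R :=
  (margT x d ad)^-1 * \sum_(a : Ty | a d == ad) f a x.

Definition regular_fun (f : Ty -> (Ty -> R) -> R) : Prop :=
  forall x, simplex x -> (forall a, 0 <= f a x <= 1) /\ \sum_a f a x = 1.

(* the marginal function of f is trait payoff increasing (where trait payoffs
   are defined, i.e. for traits with positive frequency) *)
Definition trait_payoff_increasing (u : Ty -> Ty -> R) (f : Ty -> (Ty -> R) -> R) : Prop :=
  forall x, simplex x -> forall (d : 'I_nD) (ad ad' : A d),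
    0 < margT x d ad -> 0 < margT x d ad' ->
    traitpay u x d ad > traitpay u x d ad' -> margfun f x d ad > margfun f x d ad'.

(* Frechet differentiability at x of F : R^A -> R (R^A identified with 'rV_#|Ty|) *)
Definition diffble_at (F : (Ty -> R) -> R) (x : Ty -> R) : Prop :=
  forall v : 'rV[R]_#|Ty|, (forall a, v ord0 (enum_rank a) = x a) ->
    differentiable (fun w : 'rV[R]_#|Ty| => F (fun a => w ord0 (enum_rank a))) v.

Definition partial (F : (Ty -> R) -> R) (x : Ty -> R) (a' : Ty) : R :=
  derive1 (fun t : R => F (fun b => x b + t * (b == a')%:R)) 0.

Definition f1_of (g1 : Ty -> (Ty -> R) -> R) : Ty -> (Ty -> R) -> R :=
  fun a x => g1 a x * x a.

Definition f1_cond (u : Ty -> Ty -> R) (g1 : Ty -> (Ty -> R) -> R) : Prop :=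
  [/\ regular_fun (f1_of g1), trait_payoff_increasing u (f1_of g1),
      (forall a x, simplex x -> diffble_at (g1 a) x) &
      (forall x, simplex x -> forall a a', g1 a x > g1 a' x <-> ux u x a > ux u x a')].

Definition f2_cond (u : Ty -> Ty -> R) (f2 : Ty -> (Ty -> R) -> R) : Prop :=
  [/\ regular_fun f2, trait_payoff_increasing u f2,
      (forall a x, simplex x -> diffble_at (f2 a) x),
      (forall x, simplex x -> forall a : Ty,
          0 < \prod_(d : 'I_nD) margT x d (a d) -> 0 < f2 a x) &
      (forall x, simplex x -> forall (d : 'I_nD) (a a' : Ty),
          margT x d (a d) = 0 -> 0 < partial (f2 a) x a' ->
          0 < \prod_(d' | d' != d) margT x d' (a d') /\ a' d = a d)].

Definition stationary (r : R) (g1 f2 : Ty -> (Ty -> R) -> R) (xs : Ty -> R) : Prop :=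
  simplex xs /\
  forall a, (1 - r) * f1_of g1 a xs + r * f2 a xs - xs a = 0.

(* ---- generalised partner dynamics of the trait ad at locus d ----
   A profile a_{-d} is represented by the type a = (ad, a_{-d}), i.e. by a type
   a with a d = ad; supp_{-d}(xs) then corresponds to the set partner_supp. *)
Definition partner_supp (xs : Ty -> R) (d : 'I_nD) (ad : A d) : pred Ty :=
  fun a => (a d == ad) && (0 < margP xs d a).

Definition prodoff (xs : Ty -> R) (d : 'I_nD) (a : Ty) : R :=
  \prod_(d' | d' != d) margT xs d' (a d').

Definition vpt (f2 : Ty -> (Ty -> R) -> R) (xs : Ty -> R) (d : 'I_nD) (a : Ty) : R :=
  partial (f2 a) xs a / prodoff xs d a.

Definition u_y (g1 : Ty -> (Ty -> R) -> R) (xs : Ty -> R) (d : 'I_nD) (ad : A d)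
  (y : Ty -> R) : R :=
  \sum_(a | partner_supp xs d ad a) g1 a xs * y a.

Definition v_y (f2 : Ty -> (Ty -> R) -> R) (xs : Ty -> R) (d : 'I_nD) (ad : A d)
  (y : Ty -> R) : R :=
  \sum_(a | partner_supp xs d ad a) vpt f2 xs d a * y a.

Definition U_y (r : R) (g1 f2 : Ty -> (Ty -> R) -> R) (xs : Ty -> R) (d : 'I_nD)
  (ad : A d) (y : Ty -> R) : R :=
  (1 - r) * u_y g1 xs d ad y + r * v_y f2 xs d ad y.

Definition partner_field (r : R) (g1 f2 : Ty -> (Ty -> R) -> R) (xs : Ty -> R)
  (d : 'I_nD) (ad : A d) (y : Ty -> R) (a : Ty) : R :=
  (1 - r) * g1 a xs * y a + r * prodoff xs d a * v_y f2 xs d ad y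
  - y a * U_y r g1 f2 xs d ad y.

Definition partner_solution (r : R) (g1 f2 : Ty -> (Ty -> R) -> R) (xs : Ty -> R)
  (d : 'I_nD) (ad : A d) (y : R -> Ty -> R) : Prop :=
  forall t : R, 0 <= t -> forall a, partner_supp xs d ad a ->
    is_derive t 1 (fun s => y s a) (partner_field r g1 f2 xs d ad (y t) a).

Definition unique_globally_stable (r : R) (g1 f2 : Ty -> (Ty -> R) -> R)
  (xs : Ty -> R) (d : 'I_nD) (ad : A d) : Prop :=
  exists eta : Ty -> R,
    [/\ simplexOn (partner_supp xs d ad) eta,
        (forall a, partner_supp xs d ad a -> partner_field r g1 f2 xs d ad eta a = 0) &
        (forall y : R -> Ty -> R,
           simplexOn (partner_supp xs d ad) (y 0) ->
           partner_solution r g1 f2 xs d ad y ->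
           forall a, partner_supp xs d ad a ->
             (y t a) @[t --> +oo] --> eta a)].

End Defs.

(* Main.v *)
Require Import Defs.
From HB Require Import structures.
From mathcomp Require Import all_boot all_order all_algebra.
From mathcomp Require Import all_classical all_reals all_analysis.
From mathcomp Require Import ring lra.
Import Order.TTheory GRing.Theory Num.Theory.
Import numFieldNormedType.Exports.
Local Open Scope classical_set_scope.
Local Open Scope ring_scope.

Section Calc.
Variable R : realType.

Lemma d_cont {f : R -> R} {t d : R} : is_derive t (1:R) f d -> {for t, continuous f}.
Proof.
move=> [df _]; apply: differentiable_continuous; exact/derivable1_diffP.
Qed.

Lemma d_nincr (f df : R -> R) :
  (forall t : R, 0 <= t -> is_derive (t:R) (1:R) f (df t)) ->
  (forall t : R, 0 <= t -> df t <= 0) ->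
  forall t s : R, 0 <= t -> t <= s -> f s <= f t.
Proof.
move=> hd hn t s t0 ts.
apply: (@ler0_derive1_nincry R f 0) => //.
- move=> x; rewrite in_itv /= andbT => /ltW x0; exact: (hd x x0).(ex_derive).
- move=> x; rewrite in_itv /= andbT => /ltW x0.
  by rewrite derive1E (hd x x0).(derive_val); apply: hn.
- apply: continuous_in_subspaceT => x; rewrite inE /= in_itv /= andbT => x0.
  exact: (d_cont (hd x x0)).
Qed.

Lemma d_ndecr (f df : R -> R) :
  (forall t : R, 0 <= t -> is_derive (t:R) (1:R) f (df t)) ->
  (forall t : R, 0 <= t -> 0 <= df t) ->
  forall t s : R, 0 <= t -> t <= s -> f t <= f s.
Proof.
move=> hd hn t s t0 ts.
apply: (@ger0_derive1_ndecry R f 0) => //.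
- move=> x; rewrite in_itv /= andbT => /ltW x0; exact: (hd x x0).(ex_derive).
- move=> x; rewrite in_itv /= andbT => /ltW x0.
  by rewrite derive1E (hd x x0).(derive_val); apply: hn.
- apply: continuous_in_subspaceT => x; rewrite inE /= in_itv /= andbT => x0.
  exact: (d_cont (hd x x0)).
Qed.

Lemma d_bounded (f : R -> R) :
  (forall t : R, 0 <= t -> {for t, continuous f}) ->
  forall T : R, 0 <= T -> exists B, forall t : R, 0 <= t -> t <= T -> `|f t| <= B.
Proof.
move=> hc T T0.
have cf : {within `[0, T], continuous f}.
  apply: continuous_in_subspaceT => x; rewrite inE /= in_itv /= => /andP[x0 _].
  exact: hc.
have [c1 _ h1] := EVT_max T0 cf.
have [c2 _ h2] := EVT_min T0 cf.
exists (`|f c1| + `|f c2|) => t t0 tT.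
have tin : t \in `[0, T] by rewrite in_itv /= t0 tT.
have := h1 _ tin; have := h2 _ tin.
move=> a b; rewrite ler_norml.
have n1 := ler_norm (f c1); have n2 := normr_ge0 (f c1).
have n3 := ler_norm (- f c2); rewrite normrN in n3.
have n4 := normr_ge0 (f c2).
apply/andP; split; lra.
Qed.

Lemma d_M {f g : R -> R} {x df dg : R} : is_derive (x:R) (1:R) f df -> is_derive (x:R) (1:R) g dg ->
  is_derive (x:R) (1:R) (fun t => f t * g t) (f x * dg + g x * df).
Proof. by move=> hf hg; have := is_deriveM hf hg. Qed.

Lemma d_V {f : R -> R} {x df : R} : f x != 0 -> is_derive (x:R) (1:R) f df ->
  is_derive (x:R) (1:R) (fun t => (f t)^-1) (- df / f x ^+ 2).
Proof.
move=> h hf; apply: (is_derive_eq (is_deriveV h hf)).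
by change (- f x ^- 2 * df = - df / f x ^+ 2); rewrite mulNr mulrC mulNr.
Qed.

Lemma d_D {f g : R -> R} {x df dg : R} : is_derive (x:R) (1:R) f df -> is_derive (x:R) (1:R) g dg ->
  is_derive (x:R) (1:R) (fun t => f t + g t) (df + dg).
Proof. by move=> hf hg; have := is_deriveD hf hg. Qed.

Lemma d_B {f g : R -> R} {x df dg : R} : is_derive (x:R) (1:R) f df -> is_derive (x:R) (1:R) g dg ->
  is_derive (x:R) (1:R) (fun t => f t - g t) (df - dg).
Proof. by move=> hf hg; have := is_deriveB hf hg. Qed.

Lemma d_cst (k x : R) : is_derive (x:R) (1:R) (fun _ : R => k) 0.
Proof. exact: is_derive_cst. Qed.

Lemma d_Z (k : R) {f : R -> R} {x df : R} : is_derive (x:R) (1:R) f df ->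
  is_derive (x:R) (1:R) (fun t => k * f t) (k * df).
Proof. by move=> hf; have := is_deriveZ k hf. Qed.

Lemma d_exp (k x : R) : is_derive (x:R) (1:R) (fun t => expR (k * t)) (k * expR (k * x)).
Proof.
have h1 : is_derive (x:R) (1:R) (fun t : R => k * t) (k * 1).
  by apply: d_Z; exact: is_derive_id.
have := is_derive1_comp (is_derive_expR (k * x)) h1.
by rewrite mulr1 mulrC.
Qed.

Lemma d_sum (I : finType) (P : pred I) (h : I -> R -> R) (dh : I -> R) x :
  (forall i, P i -> is_derive (x:R) (1:R) (h i) (dh i)) ->
  is_derive (x:R) (1:R) (fun t => \sum_(i | P i) h i t) (\sum_(i | P i) dh i).
Proof.
move=> hd; rewrite unlock /=.
elim: (index_enum I) => [|i s ih] /=; first exact: d_cst.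
case: ifP => Pi; last exact: ih.
exact: d_D (hd i Pi) ih.
Qed.

Lemma d_ext {f g : R -> R} {x d : R} : f = g -> is_derive (x:R) (1:R) f d -> is_derive (x:R) (1:R) g d.
Proof. by move=> ->. Qed.

Lemma d_ndecr_on (f df : R -> R) (T : R) :
  (forall t : R, 0 <= t -> is_derive (t:R) (1:R) f (df t)) ->
  (forall t : R, 0 <= t -> t <= T -> 0 <= df t) -> 0 <= T ->
  f 0 <= f T.
Proof.
move=> hd hn T0.
apply: (@ger0_derive1_ndecr R f 0 T) => //.
- move=> x; rewrite in_itv /= => /andP[/ltW x0 _]; exact: (hd x x0).(ex_derive).
- move=> x; rewrite in_itv /= => /andP[/ltW x0 /ltW xT].
  by rewrite derive1E (hd x x0).(derive_val); apply: hn.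
- apply: continuous_in_subspaceT => x; rewrite inE /= in_itv /= => /andP[x0 _].
  exact: (d_cont (hd x x0)).
Qed.

End Calc.
Arguments d_cont {R f t d}.
Arguments d_nincr {R} f df.
Arguments d_ndecr {R} f df.
Arguments d_bounded {R} f.
Arguments d_M {R f g x df dg}.
Arguments d_V {R f x df}.
Arguments d_D {R f g x df dg}.
Arguments d_B {R f g x df dg}.
Arguments d_cst {R} k x.
Arguments d_Z {R} k {f x df}.
Arguments d_exp {R} k x.
Arguments d_sum {R} I P h dh x.
Arguments d_ext {R f g x d}.
Arguments d_ndecr_on {R} f df T.


Section Weights.
Variable R : realType.
Variables (I : finType) (S : pred I).

Lemma sq_expand (w th : I -> R) (m : R) : \sum_(a | S a) w a = 1 ->
  \sum_(a | S a) w a * (th a - m) ^+ 2 =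
  \sum_(a | S a) w a * th a ^+ 2 - 2 * m * \sum_(a | S a) w a * th a + m ^+ 2.
Proof.
move=> hw.
have -> : \sum_(a | S a) w a * (th a - m) ^+ 2 =
  \sum_(a | S a) (w a * th a ^+ 2 - (2 * m) * (w a * th a) + m ^+ 2 * w a).
  by apply: eq_bigr => a _; ring.
rewrite big_split /= sumrB -mulr_sumr -mulr_sumr hw; ring.
Qed.

Lemma cvg_bsum (T : Type) (F : set_system T) (FF : Filter F)
  (f : I -> T -> R) (l : I -> R) :
  (forall i, S i -> f i t @[t --> F] --> l i) ->
  (\sum_(i | S i) f i t) @[t --> F] --> \sum_(i | S i) l i.
Proof.
move=> h; rewrite unlock /=.
elim: (index_enum I) => [|i s ih] /=; first exact: cvg_cst.
case: ifP => Si; last exact: ih.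
exact: cvgD (h i Si) ih.
Qed.

End Weights.
Arguments sq_expand {R I S}.
Arguments cvg_bsum {R I S T F FF}.


Section Model.
Variable R : realType.
Variables (I : finType) (S : pred I) (g p : I -> R) (r : R).

Definition uu (y : I -> R) := \sum_(a | S a) g a * y a.
Definition fld (y : I -> R) (a : I) :=
  (1 - r) * g a * y a + r * p a * uu y - y a * ((1 - r) * uu y + r * uu y).

End Model.
Arguments uu {R I}.
Arguments fld {R I}.

Section Static.
Variable R : realType.
Variables (I : finType) (S : pred I) (g p : I -> R) (r lam : R).
Hypotheses (hr0 : 0 < r) (hr1 : r <= 1) (hg : forall a, S a -> 0 < g a)
  (hp : forall a, S a -> 0 < p a) (hpsum : \sum_(a | S a) p a = 1)
  (hlam : 0 < lam).
Variable kap : I -> R.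
Hypothesis kapE : forall a, kap a = lam - (1 - r) * g a.
Hypothesis hk : forall a, S a -> 0 < kap a.
Variable eta : I -> R.
Hypothesis etaE : forall a, eta a = r * p a * lam / kap a.
Hypotheses (heta : \sum_(a | S a) eta a = 1)
  (hgeta : \sum_(a|S a) g a * eta a = lam).

Lemma eta_pos {a} : S a -> 0 < eta a.
Proof.
move=> Sa; rewrite etaE; apply: divr_gt0; last exact: hk.
by rewrite !mulr_gt0 // hp.
Qed.

Lemma rp_eq a : S a -> r * p a = eta a * kap a / lam.
Proof.
move=> Sa; rewrite etaE; have := hk _ Sa; have := hlam => h1 h2.
field; apply/andP; split; rewrite gt_eqF //.
Qed.

Lemma fld_th y a : S a ->
  fld S g p r y a / eta a =
  kap a * (uu S g y / lam - y a / eta a) + lam * (1 - uu S g y / lam) * (y a / eta a).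
Proof.
move=> Sa; rewrite /fld.
have e0 := eta_pos Sa; have k0 := hk _ Sa.
have -> : (1 - r) * g a = lam - kap a by rewrite kapE; ring.
rewrite rp_eq //.
field; rewrite !gt_eqF //.
Qed.


Lemma S_ne : exists a0, S a0.
Proof.
case: (pickP S) => [a0 Sa0|h]; first by exists a0.
by move: heta; rewrite big_pred0 // => /eqP; rewrite eq_sym oner_eq0.
Qed.

Definition qw a := g a * eta a / lam.
Definition Pi := \sum_(a | S a) g a * eta a / kap a.
Definition ww a := g a * eta a / kap a / Pi.
Definition beta := \sum_(a | S a) lam / (kap a * Pi).

Lemma term_pos a : S a -> 0 < g a * eta a / kap a.
Proof. by move=> Sa; rewrite divr_gt0 ?mulr_gt0 ?hg ?hk ?eta_pos. Qed.

Lemma Pi_pos : 0 < Pi.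
Proof.
have [a0 Sa0] := S_ne.
rewrite /Pi (bigD1 a0) //= ltr_wpDr ?term_pos //.
by apply: sumr_ge0 => a /andP[Sa _]; apply/ltW/term_pos.
Qed.

Lemma q_pos a : S a -> 0 < qw a.
Proof. by move=> Sa; rewrite /qw divr_gt0 ?mulr_gt0 ?hg ?eta_pos. Qed.

Lemma w_pos a : S a -> 0 < ww a.
Proof. by move=> Sa; rewrite /ww divr_gt0 ?term_pos ?Pi_pos. Qed.

Lemma q_sum : \sum_(a | S a) qw a = 1.
Proof. by rewrite /qw -mulr_suml hgeta divff // gt_eqF. Qed.

Lemma w_sum : \sum_(a | S a) ww a = 1.
Proof. by rewrite /ww -mulr_suml divff // gt_eqF // Pi_pos. Qed.

Lemma w_le a : S a -> ww a <= beta * qw a.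
Proof.
move=> Sa.
have -> : ww a = (lam / (kap a * Pi)) * qw a.
  rewrite /ww /qw; have := hk _ Sa; have := Pi_pos; move=> h1 h2.
  field; rewrite !gt_eqF //.
apply: ler_wpM2r; first exact/ltW/q_pos.
rewrite /beta (bigD1 a) //= lerDl.
apply: sumr_ge0 => b /andP[Sb _].
by rewrite divr_ge0 ?mulr_ge0 // ltW // ?hk ?Pi_pos.
Qed.

Lemma wk a : S a -> ww a * kap a = lam / Pi * qw a.
Proof.
move=> Sa; rewrite /ww /qw; have := hk _ Sa; have := Pi_pos; move=> h1 h2.
field; rewrite !gt_eqF //.
Qed.

Lemma mm_eq y : uu S g y / lam = \sum_(a | S a) qw a * (y a / eta a).
Proof.
rewrite /uu mulr_suml; apply: eq_bigr => a Sa; rewrite /qw.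
have := eta_pos Sa; move=> h1; field; rewrite !gt_eqF //.
Qed.

Lemma dc_eq y :
  \sum_(a | S a) ww a * (fld S g p r y a / eta a) =
  lam * (1 - uu S g y / lam) * \sum_(a | S a) ww a * (y a / eta a).
Proof.
set m := uu S g y / lam.
have -> : \sum_(a | S a) ww a * (fld S g p r y a / eta a) =
  \sum_(a | S a) ((lam / Pi * m) * qw a - lam / Pi * (qw a * (y a / eta a))
     + lam * (1 - m) * (ww a * (y a / eta a))).
  apply: eq_bigr => a Sa; rewrite fld_th // -/m.
  have h := wk _ Sa.
  transitivity (ww a * kap a * (m - y a / eta a) + lam * (1 - m) * (ww a * (y a / eta a))).
    by ring.
  rewrite h; ring.
rewrite big_split /= sumrB -!mulr_sumr q_sum -mm_eq -/m; ring.
Qed.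

Lemma dN_eq y :
  \sum_(a | S a) ww a * (2 * (y a / eta a) * (fld S g p r y a / eta a)) =
  2 * lam * (1 - uu S g y / lam) * \sum_(a | S a) ww a * (y a / eta a) ^+ 2
  - 2 * lam / Pi * \sum_(a | S a) qw a * (y a / eta a - uu S g y / lam) ^+ 2.
Proof.
set m := uu S g y / lam.
rewrite sq_expand; last exact: q_sum.
rewrite -mm_eq -/m.
have -> : \sum_(a | S a) ww a * (2 * (y a / eta a) * (fld S g p r y a / eta a)) =
  \sum_(a | S a) ((2 * lam / Pi * m) * (qw a * (y a / eta a))
     - 2 * lam / Pi * (qw a * (y a / eta a) ^+ 2)
     + 2 * lam * (1 - m) * (ww a * (y a / eta a) ^+ 2)).
  apply: eq_bigr => a Sa; rewrite fld_th // -/m.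
  have h := wk _ Sa.
  transitivity (2 * (ww a * kap a) * (y a / eta a) * (m - y a / eta a)
     + 2 * lam * (1 - m) * (ww a * (y a / eta a) ^+ 2)).
    by ring.
  rewrite h; ring.
rewrite big_split /= sumrB -!mulr_sumr -mm_eq -/m; ring.
Qed.

Lemma N_c_le y :
  \sum_(a | S a) ww a * (y a / eta a) ^+ 2 - (\sum_(a | S a) ww a * (y a / eta a)) ^+ 2
  <= beta * \sum_(a | S a) qw a * (y a / eta a - uu S g y / lam) ^+ 2.
Proof.
set m := uu S g y / lam.
have e1 := sq_expand ww (fun a => y a / eta a) m w_sum.
have e2 : \sum_(a | S a) ww a * (y a / eta a - m) ^+ 2 <=
          beta * \sum_(a | S a) qw a * (y a / eta a - m) ^+ 2.
  rewrite mulr_sumr; apply: ler_sum => a Sa; rewrite mulrA.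
  by apply: ler_wpM2r; [exact: sqr_ge0 | exact: w_le].
simpl in e1.
set N := \sum_(a | S a) ww a * (y a / eta a) ^+ 2 in e1 e2 *.
set c := \sum_(a | S a) ww a * (y a / eta a) in e1 e2 *.
have := sqr_ge0 (c - m); nra.
Qed.

Lemma N_c_ge y :
  (\sum_(a | S a) ww a * (y a / eta a)) ^+ 2 <= \sum_(a | S a) ww a * (y a / eta a) ^+ 2.
Proof.
set c := \sum_(a | S a) ww a * (y a / eta a).
have e1 := sq_expand ww (fun a => y a / eta a) c w_sum; simpl in e1.
have e2 : 0 <= \sum_(a | S a) ww a * (y a / eta a - c) ^+ 2.
  by apply: sumr_ge0 => a Sa; rewrite mulr_ge0 ?sqr_ge0 // ltW // w_pos.
rewrite -/c in e1; nra.
Qed.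

Lemma VV_ge0 y : 0 <= \sum_(a | S a) qw a * (y a / eta a - uu S g y / lam) ^+ 2.
Proof. by apply: sumr_ge0 => a Sa; rewrite mulr_ge0 ?sqr_ge0 // ltW // q_pos. Qed.

Lemma eps_sum y (c : R) : c != 0 ->
  \sum_(a | S a) ww a * (y a / eta a / c - 1) ^+ 2 =
  (\sum_(a | S a) ww a * (y a / eta a) ^+ 2) / c ^+ 2
  - 2 * (\sum_(a | S a) ww a * (y a / eta a)) / c + 1.
Proof.
move=> c0.
rewrite (sq_expand ww (fun a => y a / eta a / c) 1 w_sum) /=.
have h1 : \sum_(a | S a) ww a * (y a / eta a / c) ^+ 2 =
   (\sum_(a | S a) ww a * (y a / eta a) ^+ 2) / c ^+ 2.
  by rewrite mulr_suml; apply: eq_bigr => a _; rewrite expr_div_n mulrA.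
have h2 : \sum_(a | S a) ww a * (y a / eta a / c) =
   (\sum_(a | S a) ww a * (y a / eta a)) / c.
  by rewrite mulr_suml; apply: eq_bigr => a _; rewrite mulrA.
by rewrite h1 h2 expr1n mulr1 mulrA.
Qed.

Section DynPart.
Variable y : R -> I -> R.
Hypothesis hy0 : (forall a, S a -> 0 <= y 0 a) /\ \sum_(a | S a) y 0 a = 1.
Hypothesis hyd : forall t : R, 0 <= t -> forall a, S a ->
  is_derive (t:R) (1:R) (fun s => y s a) (fld S g p r (y t) a).

Definition cc (s : R) := \sum_(a | S a) ww a * (y s a / eta a).
Definition NN (s : R) := \sum_(a | S a) ww a * (y s a / eta a) ^+ 2.
Definition mt (s : R) := uu S g (y s) / lam.
Definition VVt (s : R) := \sum_(a | S a) qw a * (y s a / eta a - mt s) ^+ 2.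
Definition ss (s : R) := \sum_(a | S a) y s a.

Lemma d_th {t a} : 0 <= t -> S a ->
  is_derive (t:R) (1:R) (fun s => y s a / eta a) (fld S g p r (y t) a / eta a).
Proof.
move=> t0 Sa.
have h1 := d_Z (eta a)^-1 (hyd _ t0 _ Sa).
have h2 : (fun s => (eta a)^-1 * y s a) = (fun s => y s a / eta a).
  by apply/funext => s; rewrite mulrC.
rewrite h2 in h1.
apply: is_derive_eq h1 _.
by rewrite mulrC.
Qed.

Lemma d_cc {t} : 0 <= t -> is_derive (t:R) (1:R) cc (lam * (1 - mt t) * cc t).
Proof.
move=> t0.
apply: (is_derive_eq (@d_sum R I S (fun a s => ww a * (y s a / eta a)) _ t _)).
  by move=> a Sa; apply: d_Z; exact: d_th.
exact: dc_eq.
Qed.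

Lemma d_NN {t} : 0 <= t -> is_derive (t:R) (1:R) NN
  (2 * lam * (1 - mt t) * NN t - 2 * lam / Pi * VVt t).
Proof.
move=> t0.
apply: (is_derive_eq (@d_sum R I S (fun a s => ww a * (y s a / eta a) ^+ 2) _ t _)).
  move=> a Sa; apply: d_Z.
  exact: (d_M (d_th t0 Sa) (d_th t0 Sa)).
rewrite -dN_eq; apply: eq_bigr => a Sa; ring.
Qed.

Lemma d_mt {t} : 0 <= t -> exists d, is_derive (t:R) (1:R) mt d.
Proof.
move=> t0; eexists.
apply: (d_ext _ (@d_sum R I S (fun a s => qw a * (y s a / eta a)) _ t _)).
  by apply/funext => s; rewrite /mt mm_eq.
by move=> a Sa; apply: d_Z; exact: d_th.
Qed.

Lemma sum_fld z : \sum_(a | S a) fld S g p r z a = uu S g z * (1 - \sum_(a | S a) z a).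
Proof.
rewrite /fld.
have -> : \sum_(a | S a) ((1 - r) * g a * z a + r * p a * uu S g z -
     z a * ((1 - r) * uu S g z + r * uu S g z)) =
  \sum_(a | S a) ((1 - r) * (g a * z a) + (r * uu S g z) * p a
     - ((1 - r) * uu S g z + r * uu S g z) * z a).
  by apply: eq_bigr => a _; ring.
rewrite sumrB big_split /= -!mulr_sumr hpsum -/(uu S g z); ring.
Qed.

Lemma d_ss {t} : 0 <= t -> is_derive (t:R) (1:R) ss (uu S g (y t) * (1 - ss t)).
Proof.
move=> t0.
apply: (is_derive_eq (@d_sum R I S (fun a s => y s a) _ t _)).
  by move=> a Sa; exact: hyd _ t0 _ Sa.
exact: sum_fld.
Qed.

Lemma cc0_pos : 0 < cc 0.
Proof.
have hge : forall a, S a -> 0 <= ww a * (y 0 a / eta a).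
  move=> a Sa; apply: mulr_ge0; first exact/ltW/w_pos.
  by apply: divr_ge0; [exact: hy0.1 | exact/ltW/eta_pos].
rewrite lt_def; apply/andP; split; last exact: sumr_ge0.
apply/eqP => h0.
have hz := psumr_eq0P hge h0.
have : \sum_(a | S a) y 0 a = 0.
  apply: big1 => a Sa; have /eqP := hz a Sa.
  rewrite mulf_eq0 (gt_eqF (w_pos _ Sa)) /= mulf_eq0 invr_eq0 (gt_eqF (eta_pos Sa)) orbF.
  by move/eqP.
by rewrite hy0.2 => /eqP; rewrite oner_eq0.
Qed.

Lemma cc_nz {t} : 0 <= t -> cc t != 0.
Proof.
move=> t0.
have [B hB] : exists B, forall s, 0 <= s -> s <= t -> `|mt s| <= B.
  apply: d_bounded => // s s0; have [d hd] := d_mt s0; exact: d_cont hd.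
set K := 2 * lam * (1 + B).
have hH : forall s, 0 <= s -> is_derive (s:R) (1:R) (fun s => cc s * cc s * expR (K * s))
   (cc s * cc s * (K * expR (K * s)) + expR (K * s) *
     (cc s * (lam * (1 - mt s) * cc s) + cc s * (lam * (1 - mt s) * cc s))).
  move=> s s0; exact: (d_M (d_M (d_cc s0) (d_cc s0)) (d_exp K s)).
have := d_ndecr_on _ _ _ hH _ t0.
rewrite mulr0 expR0 mulr1.
have hc0 := cc0_pos.
case: (eqVneq (cc t) 0) => // ->; rewrite !mul0r.
move=> h; suff : 0 < 0 :> R by rewrite ltxx.
apply: (lt_le_trans _ (h _)); first by rewrite mulr_gt0.
move=> s s0 st.
have hb := hB s s0 st; have ep := expR_gt0 (K * s).
have hc2 := sqr_ge0 (cc s).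
rewrite ler_norml in hb; case/andP: hb => hb1 hb2.
have : 0 <= K + 2 * lam * (1 - mt s).
  have : 0 <= lam * (B - mt s) by rewrite mulr_ge0 ?subr_ge0 // ltW.
  have -> : K + 2 * lam * (1 - mt s) = 4 * lam + 2 * (lam * (B - mt s)) by rewrite /K; ring.
  by move=> hx; apply: addr_ge0 => //; apply: mulr_ge0 => //; exact: ltW.
move=> hk2.
have -> : cc s * cc s * (K * expR (K * s)) + expR (K * s) *
     (cc s * (lam * (1 - mt s) * cc s) + cc s * (lam * (1 - mt s) * cc s)) =
     expR (K * s) * cc s ^+ 2 * (K + 2 * lam * (1 - mt s)) by ring.
by apply: mulr_ge0 => //; apply: mulr_ge0 => //; exact: ltW.
Qed.

Lemma ss1 t : 0 <= t -> ss t = 1.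
Proof.
move=> t0.
pose Psi s := (ss s - 1) * expR (lam * s) * (cc s)^-1.
have hd : forall s : R, 0 <= s -> is_derive (s:R) (1:R) Psi ((fun _ => 0) s).
  move=> s s0; rewrite /Psi.
  apply: (is_derive_eq (d_M (d_M (d_B (d_ss s0) (d_cst 1 s)) (d_exp lam s))
                            (d_V (cc_nz s0) (d_cc s0)))).
  have c0 := cc_nz s0; have l0 : lam != 0 by rewrite gt_eqF.
  rewrite /mt /=; field; by rewrite c0.
have h1 := d_nincr Psi (fun _ => 0) hd (fun _ _ => lexx 0) 0 t (lexx 0) t0.
have h2 := d_ndecr Psi (fun _ => 0) hd (fun _ _ => lexx 0) 0 t (lexx 0) t0.
have P0 : Psi 0 = 0 by rewrite /Psi /ss hy0.2 subrr !mul0r.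
rewrite P0 in h1 h2.
have : Psi t = 0 by apply/eqP; rewrite eq_le h1 h2.
rewrite /Psi => /eqP; rewrite !mulf_eq0 invr_eq0 (negbTE (cc_nz t0)) orbF.
by rewrite (gt_eqF (expR_gt0 _)) orbF subr_eq0 => /eqP.
Qed.

Definition GG s := NN s * (cc s * cc s)^-1 - 1.

Lemma d_GG {s} : 0 <= s -> is_derive (s:R) (1:R) GG (- (2 * lam / Pi) * VVt s / (cc s ^+ 2)).
Proof.
move=> s0.
have c0 := cc_nz s0.
have cc0 : cc s * cc s != 0 by rewrite mulf_neq0.
rewrite /GG.
apply: (is_derive_eq (d_B (d_M (d_NN s0) (@d_V R (fun t => cc t * cc t) s _ cc0 (d_M (d_cc s0) (d_cc s0)))) (d_cst 1 s))).
have l0 : lam != 0 by rewrite gt_eqF.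
have p0 : Pi != 0 by rewrite gt_eqF // Pi_pos.
rewrite /=; field; by rewrite c0.
Qed.

Lemma beta_pos : 0 < beta.
Proof.
have [a0 Sa0] := S_ne.
have hP := Pi_pos.
rewrite /beta (bigD1 a0) //= ltr_wpDr //.
  apply: sumr_ge0 => a /andP[Sa _].
  by apply: divr_ge0; [exact: ltW | apply: mulr_ge0; apply: ltW => //; exact: hk].
by apply: divr_gt0 => //; apply: mulr_gt0 => //; exact: hk.
Qed.

Lemma GG_le {s} : 0 <= s -> GG s <= beta * VVt s / cc s ^+ 2.
Proof.
move=> s0; have c0 := cc_nz s0.
have h := N_c_le (y s).
have -> : GG s = (NN s - cc s ^+ 2) / cc s ^+ 2.
  by rewrite /GG; field; rewrite c0.
apply: ler_wpM2r; last exact: h.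
by rewrite invr_ge0 sqr_ge0.
Qed.

Lemma GG_ge0 {s} : 0 <= s -> 0 <= GG s.
Proof.
move=> s0; have c0 := cc_nz s0.
have h := N_c_ge (y s).
have -> : GG s = (NN s - cc s ^+ 2) / cc s ^+ 2.
  by rewrite /GG; field; rewrite c0.
apply: divr_ge0; last exact: sqr_ge0.
by rewrite subr_ge0.
Qed.

Definition al := 2 * lam / (Pi * beta).

Lemma GG_decay {t} : 0 <= t -> GG t * expR (al * t) <= GG 0.
Proof.
move=> t0.
have hd : forall s : R, 0 <= s -> is_derive (s:R) (1:R) (fun s => GG s * expR (al * s))
   (GG s * (al * expR (al * s)) + expR (al * s) * (- (2 * lam / Pi) * VVt s / (cc s ^+ 2))).
  move=> s s0; exact: (d_M (d_GG s0) (d_exp al s)).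
have := d_nincr _ _ hd _ 0 t (lexx 0) t0.
  rewrite mulr0 expR0 mulr1; apply.
move=> s s0.
have hb := beta_pos; have hP := Pi_pos.
have hal : 0 <= al by rewrite /al divr_ge0 ?mulr_ge0 // ltW.
have hle := GG_le s0.
have : al * GG s <= al * (beta * VVt s / cc s ^+ 2) by apply: ler_wpM2l.
have -> : al * (beta * VVt s / cc s ^+ 2) = 2 * lam / Pi * VVt s / cc s ^+ 2.
  by rewrite /al; field; rewrite (cc_nz s0) !gt_eqF.
move=> h.
have -> : GG s * (al * expR (al * s)) + expR (al * s) * (- (2 * lam / Pi) * VVt s / cc s ^+ 2)
   = expR (al * s) * (al * GG s - 2 * lam / Pi * VVt s / cc s ^+ 2) by ring.
apply: mulr_ge0_le0; first exact: expR_ge0.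
by rewrite subr_le0.
Qed.

Definition EE a s := y s a / eta a / cc s - 1.

Lemma EE_le {a t} : S a -> 0 <= t -> ww a * EE a t ^+ 2 <= GG t.
Proof.
move=> Sa t0; have c0 := cc_nz t0.
have -> : GG t = \sum_(b | S b) ww b * EE b t ^+ 2.
  rewrite /EE eps_sum // /GG -/(NN t) -/(cc t) /NN /cc.
  field; by rewrite c0.
rewrite (bigD1 a) //= lerDl; apply: sumr_ge0 => b /andP[Sb _].
by apply: mulr_ge0; [exact/ltW/w_pos | exact: sqr_ge0].
Qed.

Lemma EE_cvg a : S a -> EE a t @[t --> +oo] --> 0.
Proof.
move=> Sa.
have hw := w_pos _ Sa.
have hb := beta_pos; have hP := Pi_pos.
have hal : 0 < al by rewrite /al divr_gt0 ?mulr_gt0.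
have G0 := GG_ge0 (lexx 0).
set C := GG 0 / ww a.
have C0 : 0 <= C by rewrite /C divr_ge0 // ltW.
apply/cvgr0Pnorm_le => e e0.
near=> t.
have tM : C / (al * e ^+ 2) + 1 <= t by near: t; apply: nbhs_pinfty_ge; exact: num_real.
have t0 : 0 <= t.
  apply: le_trans tM; apply: addr_ge0 => //.
  by rewrite divr_ge0 // mulr_ge0 // ?sqr_ge0 // ltW.
have h1 := EE_le Sa t0.
have h2 := GG_decay t0.
have h3 := expR_ge1Dx (al * t).
have hE := sqr_ge0 (EE a t).
have hex := expR_gt0 (al * t).
have h4 : ww a * EE a t ^+ 2 * (1 + al * t) <= GG 0.
  have h4a : ww a * EE a t ^+ 2 * (1 + al * t) <= ww a * EE a t ^+ 2 * expR (al * t).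
    by apply: ler_wpM2l => //; apply: mulr_ge0 => //; exact: ltW.
  have h4b : ww a * EE a t ^+ 2 * expR (al * t) <= GG t * expR (al * t).
    by apply: ler_wpM2r => //; exact: ltW.
  exact: le_trans h4a (le_trans h4b h2).
have h5 : EE a t ^+ 2 * (al * t) <= C.
  rewrite /C ler_pdivlMr //.
  have -> : EE a t ^+ 2 * (al * t) * ww a = ww a * EE a t ^+ 2 * (al * t) by ring.
  apply: le_trans h4.
  apply: ler_wpM2l; first by apply: mulr_ge0 => //; exact: ltW.
  by rewrite lerDr.
have h6 : C <= e ^+ 2 * (al * t).
  have hae : 0 < al * e ^+ 2 by rewrite mulr_gt0 // exprn_gt0.
  have : C / (al * e ^+ 2) <= t by apply: le_trans tM; rewrite lerDl.
  rewrite ler_pdivrMr // => h.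
  by have -> : e ^+ 2 * (al * t) = t * (al * e ^+ 2) by ring.
have hat : 0 < al * t by rewrite mulr_gt0 // (lt_le_trans _ tM) // ltr_wpDl // divr_ge0 // mulr_ge0 // ?sqr_ge0 // ltW.
have h7 : EE a t ^+ 2 <= e ^+ 2.
  by rewrite -(ler_pM2r hat) (le_trans h5 h6).
rewrite ler_norml; apply/andP; split; nra.
Unshelve. all: end_near.
Qed.

Lemma y_cvg a : S a -> y t a @[t --> +oo] --> eta a.
Proof.
move=> Sa.
pose D s := \sum_(b | S b) eta b * (1 + EE b s).
have hE : forall b, S b -> (eta b * (1 + EE b s)) @[s --> +oo] --> eta b.
  move=> b Sb.
  have h : (eta b * (1 + EE b s)) @[s --> +oo] --> eta b * (1 + 0).
    have h0 : (1 + EE b s) @[s --> +oo] --> (1 + 0 : R).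
      by apply: cvgD; [exact: cvg_cst | exact: EE_cvg].
    exact: cvgMl_tmp h0.
  by rewrite addr0 mulr1 in h.
have hD : D s @[s --> +oo] --> (1:R).
  have h := cvg_bsum (fun b s => eta b * (1 + EE b s)) eta hE.
  rewrite heta in h; exact: h.
have hlim : (eta a * (1 + EE a s) * (D s)^-1) @[s --> +oo] --> eta a.
  have h2 : (D s)^-1 @[s --> +oo] --> (1:R)^-1 by apply: cvgV => //; exact: oner_neq0.
  have h := cvgM (hE a Sa) h2.
  rewrite invr1 mulr1 in h; exact: h.
apply: cvg_trans hlim; apply: near_eq_cvg.
near=> t.
have t0 : 0 <= t by near: t; apply: nbhs_pinfty_ge; exact: num_real.
have c0 := cc_nz t0.
have hy : forall b, S b -> y t b = eta b * cc t * (1 + EE b t).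
  move=> b Sb; have e0 := eta_pos Sb.
  by rewrite /EE; field; rewrite c0 gt_eqF.
have hcD : cc t * D t = 1.
  rewrite -(ss1 _ t0) /ss /D mulr_sumr; apply: eq_bigr => b Sb.
  by rewrite hy // mulrCA mulrA.
have Dnz : D t != 0.
  by apply/eqP => h; move: hcD; rewrite h mulr0 => /eqP; rewrite eq_sym oner_eq0.
have -> : (D t)^-1 = cc t.
  by apply: (mulIf Dnz); rewrite mulVf // hcD.
by rewrite hy // mulrAC.
Unshelve. all: end_near.
Qed.

End DynPart.

End Static.

Lemma argmx (R : realType) (I : finType) (S : pred I) (f : I -> R) (a0 : I) : S a0 ->
  exists a, S a /\ forall b, S b -> f b <= f a.
Proof.
move=> Sa0.
case: (@arg_maxP _ R I a0 S f Sa0) => a Sa h; exists a; split => // b Sb; exact: h.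
Qed.
Arguments argmx {R I S} f {a0}.

Section Exist.
Variable R : realType.
Variables (I : finType) (S : pred I) (g p : I -> R) (r : R).
Hypotheses (hr0 : 0 < r) (hr1 : r <= 1) (hg : forall a, S a -> 0 < g a)
  (hp : forall a, S a -> 0 < p a) (hpsum : \sum_(a | S a) p a = 1).
Hypothesis hS : exists a0, S a0.

Definition phi (l : R) := \sum_(a | S a) r * p a * l / (l - (1 - r) * g a).

Lemma exist_lam : exists lam, [/\ 0 < lam, (forall a, S a -> 0 < lam - (1 - r) * g a),
  \sum_(a | S a) r * p a * lam / (lam - (1 - r) * g a) = 1 &
  \sum_(a | S a) g a * (r * p a * lam / (lam - (1 - r) * g a)) = lam].
Proof.
have [a0 Sa0] := hS.
have [r1|rlt1] := eqVneq r 1.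
  set lam := \sum_(a | S a) g a * p a.
  have lam0 : 0 < lam.
    rewrite /lam (bigD1 a0) //= ltr_wpDr ?mulr_gt0 ?hg ?hp //.
    by apply: sumr_ge0 => a /andP[Sa _]; rewrite mulr_ge0 // ltW ?hg ?hp.
  have e : forall a, r * p a * lam / (lam - (1 - r) * g a) = p a.
    by move=> a; rewrite r1 subrr mul0r subr0 mul1r mulfK // gt_eqF.
  exists lam; split => //.
  - by move=> a _; rewrite r1 subrr mul0r subr0.
  - by rewrite (eq_bigr _ (fun a _ => e a)).
  - by rewrite (eq_bigr _ (fun a _ => congr1 (fun x => g a * x) (e a))).
have r1 : r < 1 by rewrite lt_neqAle rlt1 hr1.
have [as_ [Sas has]] := argmx (fun a => (1 - r) * g a) Sa0.
set Gm := (1 - r) * g as_ in has.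
have Gm0 : 0 < Gm by rewrite /Gm mulr_gt0 ?subr_gt0 ?hg.
set ps := p as_.
have ps0 : 0 < ps by rewrite /ps hp.
set l1 := Gm + r * ps * Gm.
set l2 := l1 + Gm / (1 - r).
have rps0 : 0 < r * ps * Gm by apply: mulr_gt0 => //; apply: mulr_gt0.
have l1G : Gm < l1 by rewrite /l1 ltrDl.
have l12 : l1 <= l2 by rewrite /l2 lerDl divr_ge0 // ?subr_ge0 // ltW.
have kpos : forall l a, Gm < l -> S a -> 0 < l - (1 - r) * g a.
  by move=> l a hl Sa; rewrite subr_gt0 (le_lt_trans (has a Sa)).
have cphi : {within `[l1, l2], continuous phi}.
  apply: continuous_in_subspaceT => x; rewrite inE /= in_itv /= => /andP[x1 _].
  have xG : Gm < x by apply: lt_le_trans x1.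
  suff [d hd] : exists d, is_derive (x:R) (1:R) phi d by exact: d_cont hd.
  eexists; apply: (d_sum I S (fun a l => r * p a * l / (l - (1 - r) * g a))) => a Sa.
  have hk : x - (1 - r) * g a != 0 by rewrite gt_eqF // kpos.
  apply: (d_M (d_Z (r * p a) (is_derive_id x 1))
              (@d_V R (fun l => l - (1 - r) * g a) x _ hk
                  (d_B (is_derive_id x 1) (d_cst ((1 - r) * g a) x)))).
have phi1 : 1 <= phi l1.
  rewrite /phi (bigD1 as_) //=.
  have -> : r * p as_ * l1 / (l1 - (1 - r) * g as_) = l1 / Gm.
    rewrite -/Gm -/ps.
    have -> : l1 - Gm = r * ps * Gm by rewrite /l1; ring.
    by field; rewrite !gt_eqF.
  have hl : 1 <= l1 / Gm by rewrite ler_pdivlMr // mul1r ltW.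
  apply: le_trans hl _; rewrite lerDl.
  apply: sumr_ge0 => a /andP[Sa _].
  apply: divr_ge0; last exact/ltW/kpos.
  apply: mulr_ge0; last exact/ltW/(lt_trans Gm0).
  by apply: mulr_ge0; apply: ltW => //; exact: hp.
have phi2 : phi l2 <= 1.
  have l2G : Gm < l2 by apply: lt_le_trans l12.
  have hsum : phi l2 <= \sum_(a | S a) (r * l2 / (l2 - Gm)) * p a.
    apply: ler_sum => a Sa.
    have k1 := kpos _ _ l2G Sa.
    have k1p : (1 - r) * g a < l2 by rewrite -subr_gt0.
    have -> : r * p a * l2 / (l2 - (1 - r) * g a) = (r * l2 * p a) * (l2 - (1 - r) * g a)^-1.
      by rewrite [r * p a * l2]mulrAC.
    have -> : r * l2 / (l2 - Gm) * p a = (r * l2 * p a) * (l2 - Gm)^-1 by rewrite mulrAC.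
    apply: ler_wpM2l.
      apply/ltW; apply: mulr_gt0; last exact: hp.
      by apply: mulr_gt0 => //; exact: (lt_trans Gm0).
    rewrite lef_pV2 ?posrE ?subr_gt0 //.
    by apply: lerB; [exact: lexx | exact: has].
  apply: le_trans hsum _.
  rewrite -mulr_sumr hpsum mulr1 ler_pdivrMr ?subr_gt0 // mul1r.
  have h : Gm <= (1 - r) * l2.
    have -> : (1 - r) * l2 = (1 - r) * l1 + Gm.
      by rewrite /l2; field; rewrite subr_eq0 eq_sym rlt1.
    rewrite -{1}[Gm]add0r lerD2r mulr_ge0 // ?subr_ge0 // ltW //.
    exact: (lt_trans Gm0).
  have -> : r * l2 = l2 - (1 - r) * l2 by ring.
  by rewrite lerD2l lerN2.
have [c cin phic] : exists2 c, c \in `[l1, l2] & phi c = 1.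
  apply: IVT => //; apply/andP; split.
    by rewrite ge_min phi2 orbT.
  by rewrite le_max phi1.
move: cin; rewrite in_itv /= => /andP[c1 _].
have cG : Gm < c by apply: lt_le_trans c1.
have c0 : 0 < c by apply: lt_trans cG.
exists c; split => //.
- by move=> a Sa; exact: kpos.
- have e1 : \sum_(a | S a) (c - (1 - r) * g a) * (r * p a * c / (c - (1 - r) * g a)) = r * c.
    rewrite (eq_bigr (fun a => (r * c) * p a)); first by rewrite -mulr_sumr hpsum mulr1.
    move=> a Sa; have := kpos _ _ cG Sa => hk; field; by rewrite gt_eqF.
  have e2 : \sum_(a | S a) (c - (1 - r) * g a) * (r * p a * c / (c - (1 - r) * g a)) =
      c * phi c - (1 - r) * \sum_(a | S a) g a * (r * p a * c / (c - (1 - r) * g a)).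
    rewrite /phi mulr_sumr mulr_sumr -sumrB; apply: eq_bigr => a _; ring.
  rewrite phic mulr1 in e2.
  set X := \sum_(a | S a) g a * (r * p a * c / (c - (1 - r) * g a)) in e2 *.
  have : (1 - r) * (X - c) = 0.
    have -> : (1 - r) * (X - c) = r * c - (c - (1 - r) * X) by ring.
    by rewrite -e2 e1 subrr.
  move/eqP; rewrite mulf_eq0 subr_eq0 eq_sym (negbTE rlt1) /= subr_eq0 => /eqP.
  by [].
Qed.
End Exist.


Theorem dyn_main (R : realType) (I : finType) (S : pred I) (g p : I -> R) (r : R)
  (hr0 : 0 < r) (hr1 : r <= 1) (hg : forall a, S a -> 0 < g a)
  (hp : forall a, S a -> 0 < p a) (hpsum : \sum_(a | S a) p a = 1)
  (hS : exists a0, S a0) :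
  exists eta : I -> R,
    [/\ (forall a, S a -> 0 <= eta a) /\ \sum_(a | S a) eta a = 1,
        (forall a, S a -> fld S g p r eta a = 0) &
        (forall y : R -> I -> R,
           (forall a, S a -> 0 <= y 0 a) /\ \sum_(a | S a) y 0 a = 1 ->
           (forall t : R, 0 <= t -> forall a, S a ->
              is_derive (t:R) (1:R) (fun s => y s a) (fld S g p r (y t) a)) ->
           forall a, S a -> y t a @[t --> +oo] --> eta a)].
Proof.
have [lam [hlam hk0 heta0 hgeta0]] := exist_lam _ _ _ _ _ _ hr0 hr1 hg hp hpsum hS.
pose kap a := lam - (1 - r) * g a.
pose eta a := r * p a * lam / kap a.
have kapE : forall a, kap a = lam - (1 - r) * g a by [].
have hk : forall a, S a -> 0 < kap a by exact: hk0.
have etaE : forall a, eta a = r * p a * lam / kap a by [].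
have heta : \sum_(a | S a) eta a = 1 by exact: heta0.
have hgeta : \sum_(a | S a) g a * eta a = lam by exact: hgeta0.
exists eta; split.
- split => //; move=> a Sa.
  exact/ltW/(eta_pos _ _ _ _ _ _ hr0 hp hlam _ hk _ etaE Sa).
- move=> a Sa; rewrite /fld /uu hgeta.
  have := hk a Sa; rewrite /eta /kap => k0.
  field; by rewrite gt_eqF.
- move=> y hy0 hyd a Sa.
  exact: (y_cvg _ _ _ _ _ _ _ hr0 hg hp hpsum hlam _ kapE hk _ etaE heta hgeta y hy0 hyd a Sa).
Qed.

Lemma prod_sum_dep {R : realType} {n : nat} {A : 'I_n -> finType} (b0 : Ty A)
  (G : forall i, A i -> R) :
  \prod_(i : 'I_n) \sum_(x : A i) G i x = \sum_(a : Ty A) \prod_(i : 'I_n) G i (a i).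
Proof.
pose J := {i : 'I_n & A i}.
have e1 : forall i : 'I_n, \sum_(x : A i) G i x =
    \sum_(j : J | tag j == i) G (tag j) (tagged j).
  move=> i.
  transitivity (\sum_(i' | i' == i) \sum_(x : A i') G i' x); first by rewrite big_pred1_eq.
  rewrite (sig_big_dep (fun i' => i' == i) (fun _ _ => true) G).
  by apply: eq_bigl => j; rewrite andbT.
rewrite (eq_bigr _ (fun i _ => e1 i)).
rewrite (bigA_distr_big_dep (fun i (j : J) => tag j == i) (fun i j => G (tag j) (tagged j))).
pose g (a : Ty A) : {ffun 'I_n -> J} := [ffun i => Tagged A (a i)].
pose h (f : {ffun 'I_n -> J}) : Ty A := [ffun i => tagged_as (Tagged A (b0 i)) (f i)].
rewrite (reindex g).
  apply: eq_big => a.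
    apply/familyP => i; rewrite ffunE unfold_in /= eqxx //.
  by move=> _; apply: eq_bigr => i _; rewrite ffunE.
exists h.
  by move=> a _; apply/ffunP => i; rewrite !ffunE tagged_asE.
move=> f; rewrite unfold_in /= => /familyP hf; apply/ffunP => i; rewrite !ffunE.
have := hf i; rewrite unfold_in.
case: (f i) => j x /= /eqP eji; subst j.
by rewrite tagged_asE.
Qed.

Section Spec.
Context {R : realType} {nD : nat} {A : 'I_nD -> finType}.

Definition upd (b : Ty A) (d : 'I_nD) (x : A d) : Ty A :=
  [ffun d' => match d =P d' return A d' with
              | ReflectT e => eq_rect d A x d' e
              | ReflectF _ => b d' end].

Lemma upd_d (b : Ty A) (d : 'I_nD) (x : A d) : upd b d x d = x.
Proof.
rewrite /upd ffunE; case: eqP => [e|]; last by [].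
by rewrite (eq_axiomK e).
Qed.

Lemma upd_o (b : Ty A) (d : 'I_nD) (x : A d) (d' : 'I_nD) : d' != d -> upd b d x d' = b d'.
Proof.
move=> ne; rewrite /upd ffunE; case: eqP => [e|] //.
by subst d'; rewrite eqxx in ne.
Qed.

Lemma sum_ind (S : pred (Ty A)) (F : Ty A -> R) (a : Ty A) : S a ->
  \sum_(b | S b) F b * (b == a)%:R = F a.
Proof.
move=> Sa; rewrite (bigD1 a) //= eqxx mulr1 big1 ?addr0 //.
by move=> b /andP[_ /negbTE ->]; rewrite mulr0.
Qed.

Lemma sum_ind1 (S : pred (Ty A)) (a : Ty A) : S a -> \sum_(b | S b) ((b == a)%:R : R) = 1.
Proof.
move=> Sa; rewrite (bigD1 a) //= eqxx big1 ?addr0 //.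
by move=> b /andP[_ /negbTE ->].
Qed.

Context {xs : Ty A -> R}.
Hypothesis hx0 : forall a, 0 <= xs a.
Hypothesis hx1 : \sum_a xs a = 1.

Lemma margT_ge0 (d : 'I_nD) (x : A d) : 0 <= margT xs d x.
Proof. by apply: sumr_ge0 => a _; exact: hx0. Qed.

Lemma margT_ge (d : 'I_nD) (a : Ty A) : xs a <= margT xs d (a d).
Proof.
rewrite /margT (bigD1 a) //= lerDl.
by apply: sumr_ge0 => b _; exact: hx0.
Qed.

Lemma margT_ge' (d : 'I_nD) (a : Ty A) (x : A d) : a d = x -> xs a <= margT xs d x.
Proof. by move=> <-; exact: margT_ge. Qed.

Lemma margP_ge (d : 'I_nD) (a a' : Ty A) : sameoff d a a' -> xs a' <= margP xs d a.
Proof.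
move=> h; rewrite /margP (bigD1 a') //= lerDl.
by apply: sumr_ge0 => b _; exact: hx0.
Qed.

Lemma margT_sum (d : 'I_nD) : \sum_(x : A d) margT xs d x = 1.
Proof.
rewrite -hx1 (partition_big (fun a : Ty A => a d) xpredT) //=.
Qed.

Lemma margP_pos (d : 'I_nD) (a : Ty A) : 0 < margP xs d a -> exists a', sameoff d a a' /\ 0 < xs a'.
Proof.
move=> h.
case/boolP: [exists a', sameoff d a a' && (0 < xs a')].
  by move/existsP => [a' /andP[h1 h2]]; exists a'.
move=> /existsPn hn; exfalso.
suff : margP xs d a <= 0 by rewrite leNgt h.
apply: sumr_le0 => a' ha'.
by have := hn a'; rewrite ha' /= -leNgt.
Qed.

Lemma prod_pos_inv (d : 'I_nD) (F : 'I_nD -> R) : (forall d', 0 <= F d') ->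
  0 < \prod_(d' | d' != d) F d' -> forall d', d' != d -> 0 < F d'.
Proof.
move=> h0 hp d' hd'; rewrite lt_def h0 andbT; apply/eqP => e.
by move: hp; rewrite (bigD1 d') //= e mul0r ltxx.
Qed.

Lemma sameoff_upd (a : Ty A) (d : 'I_nD) (x : A d) : sameoff d a (upd a d x).
Proof.
by apply/forallP => d'; apply/implyP => ne; rewrite upd_o.
Qed.

Lemma sameoff_upd' (a : Ty A) (d : 'I_nD) (x : A d) : sameoff d (upd a d x) a.
Proof.
by apply/forallP => d'; apply/implyP => ne; rewrite upd_o.
Qed.

Lemma exists_pos : exists b0, 0 < xs b0.
Proof.
case/boolP: [exists b, 0 < xs b]; first by move/existsP.
move/existsPn => hn; exfalso.
have : \sum_a xs a <= 0.
  by apply: sumr_le0 => b _; have := hn b; rewrite -leNgt.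
by rewrite hx1 ler10.
Qed.

Lemma prod_margT_sum d (ad : A d) (b0 : Ty A) :
  \sum_(a : Ty A | a d == ad) \prod_(d' | d' != d) margT xs d' (a d') = 1.
Proof.
pose G (d' : 'I_nD) (x : A d') : R :=
  if d' == d then (Tagged A x == Tagged A ad)%:R else margT xs d' x.
have h := prod_sum_dep b0 G.
have e1 : \prod_(i : 'I_nD) \sum_(x : A i) G i x = 1.
  rewrite (bigD1 d) //=.
  have -> : \prod_(i | i != d) \sum_x G i x = 1.
    by apply: big1 => i ne; rewrite /G /= (negbTE ne); exact: margT_sum.
  rewrite mulr1 /G /= eqxx.
  rewrite (eq_bigr (fun x => (x == ad)%:R)); last by move=> x _; rewrite eq_Tagged.
  rewrite (bigD1 ad) //= eqxx big1 ?addr0 //.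
  by move=> x /negbTE ->.
transitivity (\sum_(a : Ty A) \prod_(i : 'I_nD) G i (a i)); last by rewrite -h e1.
rewrite big_mkcond /=.
apply: eq_bigr => a _.
rewrite [RHS](bigD1 d) //= {1}/G /= eqxx eq_Tagged /=.
have -> : \prod_(i | i != d) G i (a i) = \prod_(d' | d' != d) margT xs d' (a d').
  by apply: eq_bigr => i ne; rewrite /G /= (negbTE ne).
by case: (a d == ad); rewrite ?mul1r ?mul0r.
Qed.

End Spec.

Local Close Scope classical_set_scope.

Theorem mainTheorem15 (R : realType) (nD : nat) (A : 'I_nD -> finType)
  (hD : (2 <= nD)%N)
  (u : Ty A -> Ty A -> R) (hu : forall a a', 0 < u a a')
  (r : R) (hr : 0 < r <= 1)
  (g1 f2 : Ty A -> (Ty A -> R) -> R)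
  (hg1 : f1_cond u g1) (hf2 : f2_cond u f2)
  (hg1pos : forall x, simplex x -> forall a, 0 < g1 a x)
  (xs : Ty A -> R) (hxs : stationary r g1 f2 xs)
  (hvu : forall (d : 'I_nD) (ad : A d), margT xs d ad = 0 ->
     forall y : Ty A -> R, simplexOn (partner_supp xs d ad) y ->
       v_y f2 xs d ad y = u_y g1 xs d ad y) :
  forall (d : 'I_nD) (ad : A d), margT xs d ad = 0 ->
    unique_globally_stable r g1 f2 xs d ad.
Proof.
move=> d ad hmarg.
case: hxs => hsx hstat.
have [hx0 hx1] := hsx.
case/andP: hr => hr0 hr1.
case: hf2 => _ _ _ hcomb _.
set S := partner_supp xs d ad.
have [b0 hb0] := exists_pos hx1.
have key : forall a : Ty A, a d = ad -> 0 < prodoff xs d a -> S a.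
  move=> a ha hp.
  set a' := upd a d (b0 d).
  have hpos := prod_pos_inv d (fun d' => margT xs d' (a d')) (fun i => margT_ge0 hx0 i (a i)) hp.
  have hall : 0 < \prod_(d'' : 'I_nD) margT xs d'' (a' d'').
    apply: prodr_gt0 => d'' _.
    case: (eqVneq d'' d) => [->|ne].
      rewrite /a' upd_d; apply: lt_le_trans hb0 _; exact: (margT_ge hx0 d b0).
    by rewrite /a' upd_o //; exact: hpos.
  have hf := hcomb xs hsx a' hall.
  have hst := hstat a'.
  have hf1 : 0 <= (1 - r) * f1_of g1 a' xs.
    apply: mulr_ge0; first by rewrite subr_ge0.
    by apply: mulr_ge0; [exact/ltW/hg1pos | exact: hx0].
  have hrf : 0 < r * f2 a' xs by apply: mulr_gt0.
  have hxa : 0 < xs a'.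
    have -> : xs a' = (1 - r) * f1_of g1 a' xs + r * f2 a' xs.
      by apply/eqP; rewrite eq_sym -subr_eq0 hst.
    exact: ltr_wpDl hf1 hrf.
  rewrite /S /partner_supp ha eqxx /=.
  apply: lt_le_trans hxa _; apply: margP_ge hx0 _ _ _ _; exact: sameoff_upd.
have hSp : forall a, S a -> 0 < prodoff xs d a.
  move=> a; rewrite /S /partner_supp => /andP[_ hm].
  have [a' [hso hxa']] := margP_pos d a hm.
  apply: prodr_gt0 => d' ne.
  apply: lt_le_trans hxa' _; apply: margT_ge' hx0 _ _ _ _.
  by move/forallP: hso => /(_ d'); rewrite ne /= => /eqP.
have hpsum : \sum_(a | S a) prodoff xs d a = 1.
  rewrite -(prod_margT_sum hx1 d ad b0).
  rewrite [RHS](bigID S) /= [X in _ = _ + X]big1 ?addr0.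
    apply: eq_bigl => a; rewrite /S /partner_supp.
    by case: (a d == ad).
  move=> a /andP[had hnS]; change (prodoff xs d a = 0).
  have hp0 : 0 <= prodoff xs d a.
    by apply: prodr_ge0 => d' _; exact: (margT_ge0 hx0 d' (a d')).
  move: hp0; rewrite le_eqVlt => /orP[/eqP <-//|hp].
  by move: hnS; rewrite key // ; move/eqP: had.
have hSne : exists a0, S a0.
  exists (upd b0 d ad); rewrite /S /partner_supp upd_d eqxx /=.
  apply: lt_le_trans hb0 _; apply: margP_ge hx0 _ _ _ _; exact: sameoff_upd'.
have hg : forall a, S a -> 0 < g1 a xs by move=> a _; exact: hg1pos.
have hvpt : forall a, S a -> vpt f2 xs d a = g1 a xs.
  move=> a Sa.
  have hs : simplexOn S (fun b => ((b == a)%:R : R)).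
    by split; [move=> b _; exact: ler0n | exact: sum_ind1].
  have := hvu d ad hmarg _ hs.
  by rewrite /v_y /u_y !sum_ind.
have hvy : forall y, v_y f2 xs d ad y = u_y g1 xs d ad y.
  by move=> y; apply: eq_bigr => a Sa; rewrite hvpt.
have hfield : forall y a, partner_field r g1 f2 xs d ad y a =
    fld S (fun a => g1 a xs) (prodoff xs d) r y a.
  by move=> y a; rewrite /partner_field /U_y hvy.
have [eta [[he0 he1] heq hcv]] :=
  dyn_main _ _ _ _ _ _ hr0 hr1 hg hSp hpsum hSne.
exists eta; split.
- by split.
- move=> a Sa. rewrite hfield. apply: heq. exact: Sa.
- move=> y [hy0 hy1] hsol a Sa.
  apply: (hcv y (conj hy0 hy1)); last exact: Sa.
  move=> t t0 b Sb. rewrite -hfield. apply: hsol. exact: t0. exact: Sb.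
Qed.
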